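(* Let $(v_k)$ be a weakly null sequence in a Banach space $V$. Then for every $\varepsilon>0$ there exist integers $k_0<\dots<k_j$ and $\lambda_0,\dots,\lambda_j\ge0$ with $\sum_{i=0}^j\lambda_i=1$ such that $\max_{0\le i\le j}\lambda_i\le\varepsilon$ and $\max\{\|\sum_{i\in F}\lambda_iv_{k_i}\|: F\subseteq\{0,\dots,j\}\}\le\varepsilon$. *)

(* Defs.v *)
From Stdlib Require Import Reals.
Open Scope R_scope.

Record BanachSpace := {
  car :> Type;
  vzero : car;
  vadd : car -> car -> car;
  vopp : car -> car;
  vscal : R -> car -> car;
  vnorm : car -> R;
  vadd_assoc : forall x y z, vadd x (vadd y z) = vadd (vadd x y) z;
  vadd_comm : forall x y, vadd x y = vadd y x;
  vadd_0 : forall x, vadd x vzero = x;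
  vadd_opp : forall x, vadd x (vopp x) = vzero;
  vscal_1 : forall x, vscal 1 x = x;
  vscal_assoc : forall a b x, vscal a (vscal b x) = vscal (a * b) x;
  vscal_distr_v : forall a x y, vscal a (vadd x y) = vadd (vscal a x) (vscal a y);
  vscal_distr_r : forall a b x, vscal (a + b) x = vadd (vscal a x) (vscal b x);
  vnorm_nonneg : forall x, 0 <= vnorm x;
  vnorm_eq0 : forall x, vnorm x = 0 -> x = vzero;
  vnorm_scal : forall a x, vnorm (vscal a x) = Rabs a * vnorm x;
  vnorm_triangle : forall x y, vnorm (vadd x y) <= vnorm x + vnorm y;
  vcomplete : forall u : nat -> car,
    (forall e, e > 0 -> exists N, forall n m, (n >= N)%nat -> (m >= N)%nat ->
        vnorm (vadd (u n) (vopp (u m))) < e) ->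
    exists l, forall e, e > 0 -> exists N, forall n, (n >= N)%nat ->
        vnorm (vadd (u n) (vopp l)) < e
}.

Arguments vzero {b} : rename.
Arguments vadd {b} : rename.
Arguments vopp {b} : rename.
Arguments vscal {b} : rename.
Arguments vnorm {b} : rename.

Definition is_dual_functional (V : BanachSpace) (f : V -> R) : Prop :=
  (forall x y, f (vadd x y) = f x + f y) /\
  (forall a x, f (vscal a x) = a * f x) /\
  (exists C, forall x, Rabs (f x) <= C * vnorm x).

Definition weakly_null (V : BanachSpace) (v : nat -> V) : Prop :=
  forall f : V -> R, is_dual_functional V f -> Un_cv (fun k => f (v k)) 0.

Fixpoint vsum {V : BanachSpace} (n : nat) (w : nat -> V) : V :=
  match n with
  | O => vzero
  | S m => vadd (vsum m w) (w m)
  end.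

(* Main.v *)
Require Import Defs.
From Stdlib Require Import Reals Lra Lia Classical ClassicalEpsilon FunctionalExtensionality PropExtensionality ProofIrrelevance Bool.
Open Scope R_scope.
Arguments vadd_assoc {b} : rename. Arguments vadd_comm {b} : rename. Arguments vadd_0 {b} : rename. Arguments vadd_opp {b} : rename.
Arguments vscal_1 {b} : rename. Arguments vscal_assoc {b} : rename. Arguments vscal_distr_v {b} : rename. Arguments vscal_distr_r {b} : rename.
Arguments vnorm_nonneg {b} : rename. Arguments vnorm_eq0 {b} : rename. Arguments vnorm_scal {b} : rename. Arguments vnorm_triangle {b} : rename.
Arguments vcomplete {b} : rename.

Lemma vadd_0l {V : BanachSpace} (x : V) : vadd vzero x = x.
Proof. rewrite vadd_comm; apply vadd_0. Qed.

Lemma vadd_cancel {V : BanachSpace} (x y z : V) : vadd x y = vadd x z -> y = z.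
Proof.
  intro H.
  assert (E : vadd (vopp x) (vadd x y) = vadd (vopp x) (vadd x z)) by (rewrite H; reflexivity).
  rewrite !vadd_assoc in E. rewrite (vadd_comm (vopp x) x), vadd_opp, !vadd_0l in E. exact E.
Qed.

Lemma vscal_0 {V : BanachSpace} (x : V) : vscal 0 x = vzero.
Proof.
  apply (vadd_cancel (vscal 0 x)). rewrite vadd_0, <- vscal_distr_r. f_equal. ring.
Qed.

Lemma vscal_v0 {V : BanachSpace} (a : R) : vscal a (@vzero V) = vzero.
Proof.
  rewrite <- (vscal_0 (@vzero V)), vscal_assoc. replace (a*0) with 0 by ring. reflexivity.
Qed.

Lemma vopp_scal {V : BanachSpace} (x : V) : vopp x = vscal (-1) x.
Proof.
  apply (vadd_cancel x). rewrite vadd_opp.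
  transitivity (vadd (vscal 1 x) (vscal (-1) x)); [| rewrite vscal_1; reflexivity].
  rewrite <- vscal_distr_r. replace (1 + -1) with 0 by ring. rewrite vscal_0; reflexivity.
Qed.

Lemma vnorm_zero {V : BanachSpace} : vnorm (@vzero V) = 0.
Proof. rewrite <- (vscal_0 (@vzero V)), vnorm_scal, Rabs_R0; ring. Qed.

Lemma vnorm_opp {V : BanachSpace} (x : V) : vnorm (vopp x) = vnorm x.
Proof. rewrite vopp_scal, vnorm_scal. replace (Rabs (-1)) with 1 by (rewrite Rabs_left; lra). ring. Qed.

Lemma vscal_add_r {V : BanachSpace} (a : R) (x y : V) : vscal a (vadd x y) = vadd (vscal a x) (vscal a y).
Proof. apply vscal_distr_v. Qed.

Lemma vadd_swap4 {V : BanachSpace} (a b c d : V) :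
  vadd (vadd a b) (vadd c d) = vadd (vadd a c) (vadd b d).
Proof.
  rewrite !vadd_assoc. f_equal. rewrite <- !vadd_assoc. f_equal. apply vadd_comm.
Qed.

Lemma vopp_add {V : BanachSpace} (x y : V) : vopp (vadd x y) = vadd (vopp x) (vopp y).
Proof. rewrite !vopp_scal; apply vscal_distr_v. Qed.

Lemma vnorm_sub_sym {V : BanachSpace} (x y : V) : vnorm (vadd x (vopp y)) = vnorm (vadd y (vopp x)).
Proof.
  rewrite <- vnorm_opp, vopp_add. rewrite !vopp_scal, vscal_assoc. replace (-1 * -1) with 1 by ring.
  rewrite vscal_1, vadd_comm; reflexivity.
Qed.

Lemma vnorm_tri_sub {V : BanachSpace} (x y z : V) :
  vnorm (vadd x (vopp z)) <= vnorm (vadd x (vopp y)) + vnorm (vadd y (vopp z)).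
Proof.
  eapply Rle_trans; [| apply vnorm_triangle].
  right. f_equal. rewrite <- (vadd_assoc x (vopp y)). rewrite (vadd_assoc (vopp y) y), (vadd_comm (vopp y) y), vadd_opp, vadd_0l. reflexivity.
Qed.

Lemma vnorm_rev {V : BanachSpace} (x y : V) : vnorm x - vnorm y <= vnorm (vadd x (vopp y)).
Proof.
  assert (H := vnorm_triangle (vadd x (vopp y)) y).
  rewrite <- vadd_assoc, (vadd_comm (vopp y) y), vadd_opp, vadd_0 in H. lra.
Qed.

Fixpoint rsum (n : nat) (a : nat -> R) : R :=
  match n with O => 0 | S m => rsum m a + a m end.

Lemma rsum_sum_f (a : nat -> R) (j : nat) : sum_f_R0 a j = rsum (S j) a.
Proof. induction j; simpl in *; [ring | rewrite IHj; ring]. Qed.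

Lemma rsum_ext n a b : (forall i, (i < n)%nat -> a i = b i) -> rsum n a = rsum n b.
Proof. induction n; simpl; intros; [reflexivity|]. rewrite IHn by (intros; apply H; lia). rewrite H by lia; reflexivity. Qed.

Lemma rsum_le n a b : (forall i, (i < n)%nat -> a i <= b i) -> rsum n a <= rsum n b.
Proof. induction n; simpl; intros; [lra|]. assert (a n <= b n) by (apply H; lia). assert (rsum n a <= rsum n b) by (apply IHn; intros; apply H; lia). lra. Qed.

Lemma rsum_add n a b : rsum n (fun i => a i + b i) = rsum n a + rsum n b.
Proof. induction n; simpl; [ring|]. rewrite IHn; ring. Qed.

Lemma rsum_scal n c a : rsum n (fun i => c * a i) = c * rsum n a.
Proof. induction n; simpl; [ring|]. rewrite IHn; ring. Qed.

Lemma rsum_nonneg n a : (forall i, (i < n)%nat -> 0 <= a i) -> 0 <= rsum n a.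
Proof. intros. apply Rle_trans with (rsum n (fun _ => 0)). { clear H; induction n; simpl; lra. } apply rsum_le; auto. Qed.

Lemma rsum_zero n a : (forall i, (i < n)%nat -> a i = 0) -> rsum n a = 0.
Proof. induction n; simpl; intros; [reflexivity|]. rewrite IHn, H by (try intros; try apply H; lia). ring. Qed.

Lemma rsum_split m n a : rsum (m + n) a = rsum m a + rsum n (fun i => a (m + i)%nat).
Proof. induction n; simpl. rewrite Nat.add_0_r; ring. rewrite Nat.add_succ_r; simpl; rewrite IHn; ring. Qed.

Lemma rsum_extend n N a : (n <= N)%nat -> (forall i, (n <= i)%nat -> a i = 0) -> rsum N a = rsum n a.
Proof.
  intros H Z. replace N with (n + (N - n))%nat by lia. rewrite rsum_split.
  rewrite (rsum_zero _ (fun i => a (n + i)%nat)); [ring|]. intros; apply Z; lia.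
Qed.

Lemma vsum_ext {V : BanachSpace} n (a b : nat -> V) : (forall i, (i < n)%nat -> a i = b i) -> vsum n a = vsum n b.
Proof. induction n; simpl; intros; [reflexivity|]. rewrite IHn by (intros; apply H; lia). rewrite H by lia; reflexivity. Qed.

Lemma vsum_add {V : BanachSpace} n (a b : nat -> V) : vsum n (fun i => vadd (a i) (b i)) = vadd (vsum n a) (vsum n b).
Proof. induction n; simpl. rewrite vadd_0; reflexivity. rewrite IHn. apply vadd_swap4. Qed.

Lemma vsum_scal {V : BanachSpace} n c (a : nat -> V) : vsum n (fun i => vscal c (a i)) = vscal c (vsum n a).
Proof. induction n; simpl. rewrite vscal_v0; reflexivity. rewrite IHn, vscal_distr_v; reflexivity. Qed.

Lemma vsum_zero {V : BanachSpace} n (a : nat -> V) : (forall i, (i < n)%nat -> a i = vzero) -> vsum n a = vzero.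
Proof. induction n; simpl; intros; [reflexivity|]. rewrite IHn, H by (try intros; try apply H; lia). apply vadd_0. Qed.

Lemma vsum_split {V : BanachSpace} m n (a : nat -> V) : vsum (m + n) a = vadd (vsum m a) (vsum n (fun i => a (m + i)%nat)).
Proof. induction n; simpl. rewrite Nat.add_0_r, vadd_0; reflexivity.
  rewrite Nat.add_succ_r; simpl; rewrite IHn. rewrite vadd_assoc; reflexivity. Qed.

Lemma vsum_extend {V : BanachSpace} n N (a : nat -> V) : (n <= N)%nat -> (forall i, (n <= i)%nat -> a i = vzero) -> vsum N a = vsum n a.
Proof.
  intros H Z. replace N with (n + (N - n))%nat by lia. rewrite vsum_split.
  rewrite (vsum_zero _ (fun i => a (n + i)%nat)); [apply vadd_0|]. intros; apply Z; lia.
Qed.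

Lemma vsum_norm {V : BanachSpace} n (a : nat -> V) : vnorm (vsum n a) <= rsum n (fun i => vnorm (a i)).
Proof. induction n; simpl. rewrite vnorm_zero; lra. eapply Rle_trans; [apply vnorm_triangle|]. lra. Qed.

Definition dual_ball (V : BanachSpace) (f : V -> R) : Prop :=
  (forall x y, f (vadd x y) = f x + f y) /\ (forall a x, f (vscal a x) = a * f x) /\
  (forall x, Rabs (f x) <= vnorm x).

Lemma dual_ball_dual {V : BanachSpace} f : dual_ball V f -> is_dual_functional V f.
Proof. intros [A [B C]]. split; [|split]; auto. exists 1. intros; rewrite Rmult_1_l; auto. Qed.

Lemma lin_zero {V : BanachSpace} (f : V -> R) : (forall a x, f (vscal a x) = a * f x) -> f vzero = 0.
Proof. intro H. rewrite <- (vscal_0 (@vzero V)), H; ring. Qed.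

Lemma lin_vsum {V : BanachSpace} (f : V -> R) : (forall x y, f (vadd x y) = f x + f y) -> (forall a x, f (vscal a x) = a * f x) ->
  forall n a, f (vsum n a) = rsum n (fun i => f (a i)).
Proof. intros Ha Hs n a; induction n; simpl. apply lin_zero; auto. rewrite Ha, IHn; reflexivity. Qed.


Definition is_chain {X : Type} (le : X -> X -> Prop) (C : X -> Prop) :=
  forall x y, C x -> C y -> le x y \/ le y x.

Definition tower {X : Type} (le : X -> X -> Prop) (sup : (X -> Prop) -> X) (f : X -> X) (a : X) (x : X) : Prop :=
  forall A : X -> Prop, A a -> (forall y, A y -> A (f y)) ->
    (forall C, is_chain le C -> (exists y, C y) -> (forall y, C y -> A y) -> A (sup C)) -> A x.

Lemma bourbaki_witt {X : Type} (le : X -> X -> Prop) (sup : (X -> Prop) -> X) (f : X -> X) (a : X)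
  (refl : forall x, le x x) (trans : forall x y z, le x y -> le y z -> le x z)
  (anti : forall x y, le x y -> le y x -> x = y)
  (sup_ub : forall C y, C y -> le y (sup C))
  (sup_lub : forall C u, (forall y, C y -> le y u) -> le (sup C) u)
  (infl : forall x, le x (f x)) :
  exists s, tower le sup f a s /\ f s = s.
Proof.
  set (M := tower le sup f a).
  assert (Ma : M a) by (intros A H1 H2 H3; exact H1).
  assert (Mf : forall y, M y -> M (f y)) by (intros y Hy A H1 H2 H3; apply H2, Hy; auto).
  assert (Ms : forall C, is_chain le C -> (exists y, C y) -> (forall y, C y -> M y) -> M (sup C)).
  { intros C HC HE HCM A H1 H2 H3. apply H3; auto. intros y Cy; apply HCM; auto. }
  assert (Mge : forall x, M x -> le a x).
  { intros x Mx. apply (Mx (fun x => le a x)); auto.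
    - intros y Hy. eapply trans; eauto.
    - intros C _ [y Cy] HC. eapply trans; [apply HC, Cy | apply sup_ub, Cy]. }
  set (extreme := fun c => forall x, M x -> le x c -> x <> c -> le (f x) c).
  assert (L1 : forall c, M c -> extreme c -> forall x, M x -> le x c \/ le (f c) x).
  { intros c Mc Ec x Mx.
    apply (Mx (fun x => M x /\ (le x c \/ le (f c) x))).
    - split; [auto | left; apply Mge; auto].
    - intros y [My [H | H]]; split; auto.
      + destruct (classic (y = c)) as [E | E].
        * right; subst; apply refl.
        * left; apply Ec; auto.
      + right; eapply trans; eauto.
    - intros C HC HE HCy. split.
      + apply Ms; auto. intros y Cy; apply HCy; auto.
      + destruct (classic (forall y, C y -> le y c)) as [Hall | Hn].
        * left; apply sup_lub; auto.
        * apply not_all_ex_not in Hn. destruct Hn as [y Hy].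
          apply imply_to_and in Hy. destruct Hy as [Cy Hy].
          destruct (HCy y Cy) as [_ [H | H]]; [contradiction|].
          right; eapply trans; [apply H | apply sup_ub, Cy]. }
  assert (L2 : forall c, M c -> extreme c).
  { intros c Mc. apply (Mc (fun c => M c /\ extreme c)).
    - split; auto. intros x Mx Hx Hne. exfalso; apply Hne, anti; auto.
    - intros y [My Ey]. split; auto. intros x Mx Hx Hne.
      destruct (L1 y My Ey x Mx) as [H | H].
      + destruct (classic (x = y)) as [E | E].
        * subst; apply refl.
        * eapply trans; [apply Ey; auto | apply infl].
      + exfalso; apply Hne, anti; auto.
    - intros C HC HE HCy. assert (Msup : M (sup C)) by (apply Ms; auto; intros; apply HCy; auto).
      split; auto. intros x Mx Hx Hne.
      destruct (classic (forall c0, C c0 -> le (f c0) x)) as [Hall | Hn].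
      + exfalso; apply Hne, anti; auto. apply sup_lub. intros y Cy. eapply trans; [apply infl | apply Hall, Cy].
      + apply not_all_ex_not in Hn. destruct Hn as [d Hc]. apply imply_to_and in Hc. destruct Hc as [Cc Hc].
        destruct (HCy d Cc) as [Md Ed].
        destruct (L1 d Md Ed x Mx) as [H | H]; [|contradiction].
        destruct (classic (x = d)) as [E | E].
        * subst x. destruct (L1 d Md Ed (sup C) Msup) as [H2 | H2]; auto.
          exfalso; apply Hne, anti; auto.
        * eapply trans; [apply Ed; auto | apply sup_ub, Cc]. }
  assert (Mchain : is_chain le M).
  { intros x y Mx My. destruct (L1 y My (L2 y My) x Mx) as [H | H]; auto.
    right; eapply trans; [apply infl | apply H]. }
  exists (sup M). split. { apply Ms; auto. exists a; auto. } apply anti; [| apply infl].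
  apply sup_ub. apply Mf. apply Ms; auto. exists a; auto.
Qed.


Lemma vcomb_eq {V : BanachSpace} (a b z : V) t s :
  vadd a (vscal t z) = vadd b (vscal s z) -> vscal (t - s) z = vadd b (vscal (-1) a).
Proof.
  intro E. assert (E2 : vadd (vadd a (vscal t z)) (vadd (vscal (-1) a) (vscal (-s) z)) =
                        vadd (vadd b (vscal s z)) (vadd (vscal (-1) a) (vscal (-s) z))) by (rewrite E; reflexivity).
  rewrite (vadd_swap4 a) in E2. rewrite (vadd_swap4 b) in E2. rewrite <- !vscal_distr_r in E2.
  replace (s + - s) with 0 in E2 by ring. rewrite vscal_0, vadd_0 in E2.
  rewrite <- E2. transitivity (vadd (vscal (1 + -1) a) (vscal (t + - s) z)).
  - replace (1 + -1) with 0 by ring. rewrite vscal_0, vadd_0l. f_equal.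
  - rewrite vscal_distr_r, vscal_1. reflexivity.
Qed.

Lemma vadd_comb {V : BanachSpace} (d1 d2 z : V) t1 t2 :
  vadd (vadd d1 (vscal t1 z)) (vadd d2 (vscal t2 z)) = vadd (vadd d1 d2) (vscal (t1 + t2) z).
Proof. rewrite vadd_swap4, vscal_distr_r; reflexivity. Qed.

Lemma scal_comb {V : BanachSpace} (d z : V) u t :
  vscal u (vadd d (vscal t z)) = vadd (vscal u d) (vscal (u * t) z).
Proof. rewrite vscal_distr_v, vscal_assoc; reflexivity. Qed.

Definition hb_valid {V : BanachSpace} (x0 : V) (G : V -> R -> Prop) : Prop :=
  (forall a r s, G a r -> G a s -> r = s) /\
  (forall a b r s, G a r -> G b s -> G (vadd a b) (r + s)) /\
  (forall a r t, G a r -> G (vscal t a) (t * r)) /\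
  (forall a r, G a r -> r <= vnorm a) /\
  G x0 (vnorm x0).

Definition hb_good {V : BanachSpace} (G : V -> R -> Prop) (z : V) (c : R) : Prop :=
  (forall d gd, G d gd -> gd - vnorm (vadd d (vopp z)) <= c) /\
  (forall d gd, G d gd -> c <= vnorm (vadd d z) - gd).

Definition hb_ext {V : BanachSpace} (G : V -> R -> Prop) (z : V) (c : R) : V -> R -> Prop :=
  fun a r => exists d gd t, G d gd /\ a = vadd d (vscal t z) /\ r = gd + t * c.

Lemma hb_zero {V : BanachSpace} (x0 : V) G : hb_valid x0 G -> G vzero 0.
Proof. intros [_ [_ [Hs [_ Hx]]]]. rewrite <- (vscal_0 x0). replace 0 with (0 * vnorm x0) at 2 by ring. auto. Qed.

Lemma hb_good_exists {V : BanachSpace} (x0 : V) G z : hb_valid x0 G -> exists c, hb_good G z c.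
Proof.
  intros HV. pose proof HV as [Hf [Ha [Hs [Hb Hx]]]].
  assert (key : forall d1 g1 d2 g2, G d1 g1 -> G d2 g2 -> g1 - vnorm (vadd d1 (vopp z)) <= vnorm (vadd d2 z) - g2).
  { intros d1 g1 d2 g2 H1 H2. assert (H := Hb _ _ (Ha _ _ _ _ H1 H2)).
    assert (E : vadd d1 d2 = vadd (vadd d1 (vopp z)) (vadd d2 z)).
    { rewrite vadd_swap4, (vadd_comm (vopp z) z), vadd_opp, vadd_0; reflexivity. }
    rewrite E in H. pose proof (vnorm_triangle (vadd d1 (vopp z)) (vadd d2 z)). lra. }
  set (E := fun e => exists d gd, G d gd /\ e = gd - vnorm (vadd d (vopp z))).
  assert (Hbd : bound E).
  { exists (vnorm (vadd vzero z) - 0). intros e [d [gd [H ->]]]. apply (key _ _ vzero 0); auto. eapply hb_zero; eauto. }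
  assert (Hne : exists e, E e) by (exists (0 - vnorm (vadd vzero (vopp z))); exists vzero, 0; split; auto; eapply hb_zero; eauto).
  destruct (completeness E Hbd Hne) as [c [Hub Hlub]].
  exists c. split.
  - intros d gd H. apply Hub. exists d, gd; auto.
  - intros d gd H. apply Hlub. intros e [d1 [g1 [H1 ->]]]. apply key; auto.
Qed.

Lemma hb_ext_valid {V : BanachSpace} (x0 : V) G z c :
  hb_valid x0 G -> (forall r, ~ G z r) -> hb_good G z c -> hb_valid x0 (hb_ext G z c).
Proof.
  intros HV Hz [Hc1 Hc2]. pose proof HV as [Hf [Ha [Hs [Hb Hx]]]].
  split; [|split; [|split; [|split]]].
  - intros a r s [d [gd [t [H1 [-> ->]]]]] [d' [gd' [t' [H1' [E ->]]]]].
    destruct (Req_dec t t') as [Et | Et].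
    + subst t'. assert (Ed : d = d') by (apply (vadd_cancel (vscal t z)); rewrite !(vadd_comm (vscal t z)); exact E).
      subst d'. rewrite (Hf _ _ _ H1 H1'); reflexivity.
    + exfalso. apply vcomb_eq in E.
      assert (G (vadd d' (vscal (-1) d)) (gd' + (-1) * gd)) by (apply Ha; auto).
      apply (Hz (/ (t - t') * (gd' + -1 * gd))).
      replace z with (vscal (/ (t - t')) (vadd d' (vscal (-1) d))).
      * apply Hs; auto.
      * rewrite <- E, vscal_assoc. replace (/ (t - t') * (t - t')) with 1 by (field; lra). apply vscal_1.
  - intros a b r s [d [gd [t [H1 [-> ->]]]]] [d' [gd' [t' [H1' [-> ->]]]]].
    exists (vadd d d'), (gd + gd'), (t + t'). split; [auto|split]; [apply vadd_comb | ring].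
  - intros a r u [d [gd [t [H1 [-> ->]]]]]. exists (vscal u d), (u * gd), (u * t). split; [auto|split]; [apply scal_comb | ring].
  - intros a r [d [gd [t [H1 [-> ->]]]]].
    destruct (Rtotal_order t 0) as [Hlt | [H0 | Hgt]].
    + set (s := - t). assert (Hsp : 0 < s) by (unfold s; lra).
      assert (Hd : G (vscal (/ s) d) (/ s * gd)) by auto.
      specialize (Hc1 _ _ Hd).
      assert (E : vscal s (vadd (vscal (/ s) d) (vopp z)) = vadd d (vscal t z)).
      { rewrite vscal_distr_v, vscal_assoc, vopp_scal, vscal_assoc.
        replace (s * / s) with 1 by (field; lra). rewrite vscal_1. f_equal. f_equal. unfold s; ring. }
      rewrite <- E, vnorm_scal, Rabs_right by lra.
      assert (s * (/ s * gd - vnorm (vadd (vscal (/ s) d) (vopp z))) <= s * c) by (apply Rmult_le_compat_l; lra).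
      replace (s * (/ s * gd - vnorm (vadd (vscal (/ s) d) (vopp z)))) with (gd - s * vnorm (vadd (vscal (/ s) d) (vopp z))) in H by (field; lra).
      unfold s in *. lra.
    + subst t. rewrite vscal_0, vadd_0. replace (gd + 0 * c) with gd by ring. auto.
    + assert (Hd : G (vscal (/ t) d) (/ t * gd)) by auto.
      specialize (Hc2 _ _ Hd).
      assert (E : vscal t (vadd (vscal (/ t) d) z) = vadd d (vscal t z)).
      { rewrite vscal_distr_v, vscal_assoc. replace (t * / t) with 1 by (field; lra). rewrite vscal_1. reflexivity. }
      rewrite <- E, vnorm_scal, Rabs_right by lra.
      assert (t * c <= t * (vnorm (vadd (vscal (/ t) d) z) - / t * gd)) by (apply Rmult_le_compat_l; lra).
      replace (t * (vnorm (vadd (vscal (/ t) d) z) - / t * gd)) with (t * vnorm (vadd (vscal (/ t) d) z) - gd) in H by (field; lra).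
      lra.
  - exists x0, (vnorm x0), 0. split; [auto|split]. rewrite vscal_0, vadd_0; reflexivity. ring.
Qed.

Theorem hahn_banach {V : BanachSpace} (x0 : V) : exists f, dual_ball V f /\ f x0 = vnorm x0.
Proof.
  set (X := V -> R -> Prop).
  set (le := fun G H : X => forall a r, G a r -> H a r).
  set (sup := fun (C : X -> Prop) => (fun a r => exists G, C G /\ G a r) : X).
  set (cond := fun G : X => hb_valid x0 G /\ exists z, forall r, ~ G z r).
  set (zpick := fun G : X => epsilon (inhabits x0) (fun z => forall r, ~ G z r)).
  set (cpick := fun G : X => epsilon (inhabits 0) (fun c => hb_good G (zpick G) c)).
  set (f := fun G : X => (fun a r => (cond G /\ hb_ext G (zpick G) (cpick G) a r) \/ (~ cond G /\ G a r)) : X).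
  set (G0 := (fun a r => exists t, a = vscal t x0 /\ r = t * vnorm x0) : X).
  assert (Hz : forall G, cond G -> forall r, ~ G (zpick G) r).
  { intros G [_ HE]. apply (epsilon_spec (inhabits x0) (fun z => forall r, ~ G z r) HE). }
  assert (Hc : forall G, cond G -> hb_good G (zpick G) (cpick G)).
  { intros G [HV _]. apply (epsilon_spec (inhabits 0) (fun c => hb_good G (zpick G) c)). eapply hb_good_exists; eauto. }
  destruct (bourbaki_witt le sup f G0) as [s [Ts Fs]].
  - intros x a r; auto.
  - intros x y z H1 H2 a r H; auto.
  - intros x y H1 H2. apply functional_extensionality; intro a. apply functional_extensionality; intro r.
    apply propositional_extensionality; split; auto.
  - intros C y Cy a r H. exists y; auto.
  - intros C u H a r [G [CG HG]]. apply (H G CG); auto.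
  - intros G a r H. destruct (classic (cond G)) as [HC | HC].
    + left. split; auto. exists a, r, 0. split; auto. split. rewrite vscal_0, vadd_0; reflexivity. ring.
    + right; auto.
  - assert (Vs : hb_valid x0 s).
    { apply (Ts (hb_valid x0)).
      - split; [|split; [|split; [|split]]].
        + intros a r r' [t [-> ->]] [t' [E ->]].
          destruct (Req_dec (vnorm x0) 0) as [N0 | N0]. rewrite N0; ring.
          destruct (Req_dec t t') as [-> | Et]; [reflexivity|]. exfalso.
          assert (E2 : vadd vzero (vscal t x0) = vadd vzero (vscal t' x0)) by (rewrite !vadd_0l; auto).
          apply vcomb_eq in E2. rewrite vscal_v0, vadd_0 in E2.
          apply N0. assert (H := f_equal vnorm E2). rewrite vnorm_scal, vnorm_zero in H.
          apply Rmult_integral in H. destruct H as [H | H]; auto. exfalso. assert (t - t' = 0) by (destruct (Rcase_abs (t - t')); [rewrite Rabs_left in H | rewrite Rabs_right in H]; lra). lra.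
        + intros a b r r' [t [-> ->]] [t' [-> ->]]. exists (t + t'). split; [rewrite vscal_distr_r|]; auto; ring.
        + intros a r u [t [-> ->]]. exists (u * t). split; [rewrite vscal_assoc|]; auto; ring.
        + intros a r [t [-> ->]]. rewrite vnorm_scal. apply Rmult_le_compat_r; [apply vnorm_nonneg | apply Rle_abs].
        + exists 1. split; [rewrite vscal_1|]; auto; ring.
      - intros G HV. destruct (classic (cond G)) as [HC | HC].
        + assert (HV2 := hb_ext_valid x0 G _ _ HV (Hz G HC) (Hc G HC)).
          replace (f G) with (hb_ext G (zpick G) (cpick G)); auto.
          apply functional_extensionality; intro a. apply functional_extensionality; intro r.
          apply propositional_extensionality; unfold f; split; [intro H; left; auto | intros [[_ H] | [H _]]; auto; contradiction].
        + replace (f G) with G; auto.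
          apply functional_extensionality; intro a. apply functional_extensionality; intro r.
          apply propositional_extensionality; unfold f; split; [intro H; right; auto | intros [[H _] | [_ H]]; auto; contradiction].
      - intros C HC [G0' CG0] HCV. split; [|split; [|split; [|split]]].
        + intros a r r' [G1 [C1 H1]] [G2 [C2 H2]]. destruct (HC G1 G2 C1 C2) as [L | L].
          * apply (proj1 (HCV G2 C2) a); auto.
          * apply (proj1 (HCV G1 C1) a); auto.
        + intros a b r r' [G1 [C1 H1]] [G2 [C2 H2]]. destruct (HC G1 G2 C1 C2) as [L | L].
          * exists G2; split; auto. apply (proj1 (proj2 (HCV G2 C2))); auto.
          * exists G1; split; auto. apply (proj1 (proj2 (HCV G1 C1))); auto.
        + intros a r t [G1 [C1 H1]]. exists G1; split; auto. apply (HCV G1 C1); auto.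
        + intros a r [G1 [C1 H1]]. apply (HCV G1 C1); auto.
        + exists G0'; split; auto. apply (HCV G0' CG0). }
    assert (Tot : forall a, exists r, s a r).
    { intro a. apply NNPP; intro Hn.
      assert (HC : cond s) by (split; auto; exists a; intros r Hr; apply Hn; exists r; auto).
      apply (Hz s HC (cpick s)).
      assert (H : f s (zpick s) (cpick s)).
      { left. split; auto.
        exists vzero, 0, 1. split; [eapply hb_zero; eauto | split]. rewrite vscal_1, vadd_0l; reflexivity. ring. }
      rewrite Fs in H. exact H. }
    set (F := fun a => epsilon (inhabits 0) (fun r => s a r)).
    assert (HF : forall a, s a (F a)) by (intro a; apply (epsilon_spec (inhabits 0) (fun r => s a r)), Tot).
    destruct Vs as [Hf [Ha [Hs [Hb Hx]]]].
    exists F. split; [split; [|split]|].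
    + intros x y. apply (Hf (vadd x y)); auto.
    + intros t x. apply (Hf (vscal t x)); auto.
    + intros x. apply Rabs_le. split.
      * assert (H := Hb _ _ (Hs _ _ (-1) (HF x))). rewrite <- vopp_scal, vnorm_opp in H. lra.
      * auto.
    + apply (Hf x0); auto.
Qed.


Lemma Rabs_def2b (x a : R) : Rabs x <= a -> - a <= x /\ x <= a.
Proof. unfold Rabs; destruct (Rcase_abs x); intros; lra. Qed.

Lemma lim_le (u : nat -> R) l c N : Un_cv u l -> (forall n, (n >= N)%nat -> u n <= c) -> l <= c.
Proof.
  intros H B. apply Rnot_lt_le; intro Hlt. destruct (H (l - c)) as [N1 HN]; [lra|].
  specialize (HN (max N N1) ltac:(lia)). specialize (B (max N N1) ltac:(lia)).
  unfold Rdist in HN. apply Rabs_def2 in HN. lra.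
Qed.

Lemma lim_ge (u : nat -> R) l c N : Un_cv u l -> (forall n, (n >= N)%nat -> c <= u n) -> c <= l.
Proof.
  intros H B. apply Rnot_lt_le; intro Hlt. destruct (H (c - l)) as [N1 HN]; [lra|].
  specialize (HN (max N N1) ltac:(lia)). specialize (B (max N N1) ltac:(lia)).
  unfold Rdist in HN. apply Rabs_def2 in HN. lra.
Qed.

Lemma pow3_pos j : 0 < (/3)^j.
Proof. apply pow_lt; lra. Qed.

Lemma fseries {V : BanachSpace} (gs : nat -> V -> R) (fs : nat -> V -> R) :
  (forall x, gs O x = 0) -> (forall j x, gs (S j) x = gs j x + (/3)^j * fs j x) ->
  (forall j, dual_ball V (fs j)) ->
  exists f, is_dual_functional V f /\
    forall j x, Rabs (f x - gs j x) <= 3/2 * (/3)^j * vnorm x.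
Proof.
  intros G0 GS Fd.
  assert (Diff : forall j k x, Rabs (gs (j + k)%nat x - gs j x) <= 3/2 * ((/3)^j - (/3)^(j+k)) * vnorm x).
  { intros j k x. induction k.
    - rewrite Nat.add_0_r. unfold Rminus. rewrite Rplus_opp_r, Rabs_R0. lra.
    - rewrite Nat.add_succ_r, GS.
      replace (gs (j + k)%nat x + (/ 3) ^ (j + k) * fs (j + k)%nat x - gs j x)
        with ((gs (j + k)%nat x - gs j x) + (/ 3) ^ (j + k) * fs (j + k)%nat x) by ring.
      eapply Rle_trans; [apply Rabs_triang|]. rewrite Rabs_mult, (Rabs_right ((/3)^(j+k))) by (apply Rle_ge, Rlt_le, pow3_pos).
      destruct (Fd (j + k)%nat) as [_ [_ Hb]]. specialize (Hb x).
      assert ((/3)^(j+k) * Rabs (fs (j + k)%nat x) <= (/3)^(j+k) * vnorm x) by (apply Rmult_le_compat_l; [apply Rlt_le, pow3_pos | auto]).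
      simpl pow. nra. }
  assert (Diff2 : forall j J x, (j <= J)%nat -> Rabs (gs J x - gs j x) <= 3/2 * (/3)^j * vnorm x).
  { intros j J x H. replace J with (j + (J - j))%nat by lia. eapply Rle_trans; [apply Diff|].
    pose proof (pow3_pos (j + (J - j))). pose proof (vnorm_nonneg x). nra. }
  assert (Cau : forall x, Cauchy_crit (fun J => gs J x)).
  { intros x eps He. destruct (pow_lt_1_zero (/3) ltac:(rewrite Rabs_right; lra) (eps / (3 * (vnorm x + 1)))) as [N HN].
    { apply Rdiv_lt_0_compat; [lra|]. pose proof (vnorm_nonneg x); lra. }
    exists N. intros n m Hn Hm. unfold Rdist.
    specialize (HN N ltac:(lia)). rewrite Rabs_right in HN by (apply Rle_ge, Rlt_le, pow3_pos).
    assert (H1 := Diff2 N n x Hn). assert (H2 := Diff2 N m x Hm).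
    apply Rabs_def2b in H1. apply Rabs_def2b in H2.
    assert (3 * (/3)^N * vnorm x < eps).
    { pose proof (vnorm_nonneg x). pose proof (pow3_pos N).
      apply Rmult_lt_compat_r with (r := 3 * (vnorm x + 1)) in HN; [|lra].
      unfold Rdiv in HN. rewrite Rmult_assoc, Rinv_l, Rmult_1_r in HN by lra. nra. }
    apply Rabs_def1; lra. }
  set (f := fun x => proj1_sig (R_complete _ (Cau x))).
  assert (Hf : forall x, Un_cv (fun J => gs J x) (f x)) by (intro x; apply (proj2_sig (R_complete _ (Cau x)))).
  assert (Lin : forall J, (forall x y, gs J (vadd x y) = gs J x + gs J y) /\ (forall a x, gs J (vscal a x) = a * gs J x)).
  { induction J. - split; intros; rewrite !G0; ring.
    - destruct IHJ as [IA IS]. destruct (Fd J) as [FA [FS _]]. split; intros; rewrite !GS, ?IA, ?IS, ?FA, ?FS; ring. }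
  exists f. split; [split; [|split]|].
  - intros x y. apply (UL_sequence (fun J => gs J (vadd x y))); auto.
    replace (fun J => gs J (vadd x y)) with (fun J => gs J x + gs J y).
    + apply CV_plus; auto.
    + apply FunctionalExtensionality.functional_extensionality; intro J; symmetry; apply (proj1 (Lin J)).
  - intros a x. apply (UL_sequence (fun J => gs J (vscal a x))); auto.
    replace (fun J => gs J (vscal a x)) with (fun J => (fun _ => a) J * gs J x).
    + apply CV_mult; auto. intros e He; exists O; intros; unfold Rdist; rewrite Rminus_diag, Rabs_R0; lra.
    + apply FunctionalExtensionality.functional_extensionality; intro J; symmetry; apply (proj2 (Lin J)).
  - exists (3/2). intro x. assert (Hb : forall J, Rabs (gs J x) <= 3/2 * vnorm x).
    { intro J. assert (H := Diff2 O J x ltac:(lia)). rewrite G0 in H. simpl in H. rewrite Rminus_0_r in H. lra. }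
    apply Rabs_le. split.
    + apply (lim_ge _ _ _ O (Hf x)). intros n _. specialize (Hb n). apply Rabs_def2b in Hb. lra.
    + apply (lim_le _ _ _ O (Hf x)). intros n _. specialize (Hb n). apply Rabs_def2b in Hb. lra.
  - intros j x.
    assert (L1 : gs j x - 3/2 * (/3)^j * vnorm x <= f x).
    { apply (lim_ge _ _ _ j (Hf x)). intros n Hn. specialize (Diff2 j n x Hn). apply Rabs_def2b in Diff2. lra. }
    assert (L2 : f x <= gs j x + 3/2 * (/3)^j * vnorm x).
    { apply (lim_le _ _ _ j (Hf x)). intros n Hn. specialize (Diff2 j n x Hn). apply Rabs_def2b in Diff2. lra. }
    apply Rabs_le; lra.
Qed.

Definition pickf {V : BanachSpace} (x : V) : V -> R :=
  epsilon (inhabits (fun _ : V => 0)) (fun f => dual_ball V f /\ f x = vnorm x).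

Lemma pickf_spec {V : BanachSpace} (x : V) : dual_ball V (pickf x) /\ pickf x x = vnorm x.
Proof. unfold pickf. apply (epsilon_spec (inhabits (fun _ : V => 0)) (fun f => dual_ball V f /\ f x = vnorm x)). apply hahn_banach. Qed.

Definition pickn {V : BanachSpace} (v : nat -> V) (j : nat) (g : V -> R) : nat :=
  epsilon (inhabits 0%nat) (fun n => (j <= n)%nat /\ Rabs (g (v n)) <= 1 /\ 4 * 3^j <= vnorm (v n)).

Fixpoint gsq {V : BanachSpace} (v : nat -> V) (j : nat) : V -> R :=
  match j with
  | O => fun _ => 0
  | S j => fun x => gsq v j x + (/3)^j * pickf (v (pickn v j (gsq v j))) x
  end.

Lemma wn_bounded_sub (V : BanachSpace) (v : nat -> V) (hv : weakly_null V v) :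
  exists M, forall N, exists n, (n >= N)%nat /\ vnorm (v n) <= M.
Proof.
  apply NNPP; intro Hn.
  assert (H : forall M, exists N, forall n, (n >= N)%nat -> M < vnorm (v n)).
  { intro M. apply NNPP; intro H1. apply Hn. exists M. intro N. apply NNPP; intro H2. apply H1. exists N.
    intros n Hn'. apply Rnot_le_lt. intro H3. apply H2. exists n; auto. }
  clear Hn.
  assert (Dg : forall j, is_dual_functional V (gsq v j)).
  { induction j; simpl.
    - split; [intros; ring | split; [intros; ring | exists 0; intros; rewrite Rabs_R0; lra]].
    - destruct IHj as [IA [IS [C IC]]]. destruct (pickf_spec (v (pickn v j (gsq v j)))) as [[FA [FS FB]] _].
      split; [|split].
      + intros x y. rewrite IA, FA. ring.
      + intros a x. rewrite IS, FS. ring.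
      + exists (Rabs C + (/3)^j). intro x. eapply Rle_trans; [apply Rabs_triang|].
        rewrite Rabs_mult, (Rabs_right ((/3)^j)) by (apply Rle_ge, Rlt_le, pow3_pos).
        specialize (IC x). specialize (FB x). pose proof (pow3_pos j). pose proof (vnorm_nonneg x).
        assert (C * vnorm x <= Rabs C * vnorm x) by (apply Rmult_le_compat_r; [auto | apply Rle_abs]). nra. }
  assert (Pn : forall j, (j <= pickn v j (gsq v j))%nat /\ Rabs (gsq v j (v (pickn v j (gsq v j)))) <= 1 /\ 4 * 3^j <= vnorm (v (pickn v j (gsq v j)))).
  { intro j. unfold pickn. apply (epsilon_spec (inhabits 0%nat) (fun n => (j <= n)%nat /\ Rabs (gsq v j (v n)) <= 1 /\ 4 * 3^j <= vnorm (v n))).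
    destruct (hv _ (Dg j) 1 ltac:(lra)) as [N1 HN1]. destruct (H (4 * 3^j)) as [N2 HN2].
    exists (max j (max N1 N2)). split; [lia|split].
    - specialize (HN1 (max j (max N1 N2)) ltac:(lia)). unfold Rdist in HN1. rewrite Rminus_0_r in HN1. lra.
    - apply Rlt_le, HN2; lia. }
  destruct (fseries (gsq v) (fun j => pickf (v (pickn v j (gsq v j))))) as [f [Fd Fb]].
  - intros; reflexivity.
  - intros; reflexivity.
  - intro j; apply pickf_spec.
  - destruct (hv f Fd 1 ltac:(lra)) as [N HN].
    destruct (Pn N) as [P1 [P2 P3]]. set (n := pickn v N (gsq v N)) in *.
    specialize (HN n P1). unfold Rdist in HN. rewrite Rminus_0_r in HN.
    specialize (Fb (S N) (v n)). simpl in Fb. fold n in Fb.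
    rewrite (proj2 (pickf_spec (v n))) in Fb.
    apply Rabs_def2b in Fb. apply Rabs_def2b in P2. apply Rabs_def2 in HN.
    assert (E : (/3)^N * 3^N = 1) by (rewrite <- Rpow_mult_distr; replace (/3 * 3) with 1 by field; apply pow1).
    assert ((/3)^N * vnorm (v n) >= 4) by (pose proof (pow3_pos N); nra).
    lra.
Qed.


Definition psum {V : BanachSpace} (u : nat -> V) (N : nat) (y : nat -> R) (F : nat -> bool) : V :=
  vsum N (fun n => if F n then vscal (y n) (u n) else vzero).

Definition Pset {V : BanachSpace} (u : nat -> V) N y := fun r => exists F, r = vnorm (psum u N y F).

Lemma Pset_lub_ex {V : BanachSpace} (u : nat -> V) N y : exists p, is_lub (Pset u N y) p.
Proof.
  assert (Hb : bound (Pset u N y)).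
  { exists (rsum N (fun n => Rabs (y n) * vnorm (u n))). intros r [F ->]. unfold psum.
    eapply Rle_trans; [apply vsum_norm|]. apply rsum_le. intros i _. destruct (F i).
    - rewrite vnorm_scal; lra.
    - rewrite vnorm_zero. pose proof (Rabs_pos (y i)); pose proof (vnorm_nonneg (u i)). nra. }
  destruct (completeness _ Hb) as [p Hp]; [exists (vnorm (psum u N y (fun _ => true))), (fun _ => true); auto|].
  exists p; auto.
Qed.

Definition P {V : BanachSpace} (u : nat -> V) N y : R := epsilon (inhabits 0) (fun p => is_lub (Pset u N y) p).

Lemma P_spec {V : BanachSpace} (u : nat -> V) N y : is_lub (Pset u N y) (P u N y).
Proof. unfold P. apply (epsilon_spec (inhabits 0) (fun p => is_lub (Pset u N y) p)). apply Pset_lub_ex. Qed.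

Lemma P_ub {V : BanachSpace} (u : nat -> V) N y F : vnorm (psum u N y F) <= P u N y.
Proof. apply (proj1 (P_spec u N y)). exists F; auto. Qed.

Lemma P_lub {V : BanachSpace} (u : nat -> V) N y c : (forall F, vnorm (psum u N y F) <= c) -> P u N y <= c.
Proof. intro H. apply (proj2 (P_spec u N y)). intros r [F ->]; auto. Qed.

Lemma P_nonneg {V : BanachSpace} (u : nat -> V) N y : 0 <= P u N y.
Proof. eapply Rle_trans; [apply (vnorm_nonneg (psum u N y (fun _ => true))) | apply (P_ub u N y (fun _ => true))]. Qed.

Lemma psum_add {V : BanachSpace} (u : nat -> V) N y z F :
  psum u N (fun n => y n + z n) F = vadd (psum u N y F) (psum u N z F).
Proof. unfold psum. rewrite <- vsum_add. apply vsum_ext. intros i _. destruct (F i); [apply vscal_distr_r | rewrite vadd_0; auto]. Qed.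

Lemma psum_scal {V : BanachSpace} (u : nat -> V) N t y F :
  psum u N (fun n => t * y n) F = vscal t (psum u N y F).
Proof. unfold psum. rewrite <- vsum_scal. apply vsum_ext. intros i _. destruct (F i); [rewrite vscal_assoc; auto | rewrite vscal_v0; auto]. Qed.

Lemma P_add {V : BanachSpace} (u : nat -> V) N y z : P u N (fun n => y n + z n) <= P u N y + P u N z.
Proof.
  apply P_lub. intro F. rewrite psum_add. eapply Rle_trans; [apply vnorm_triangle|].
  pose proof (P_ub u N y F); pose proof (P_ub u N z F); lra.
Qed.

Lemma P_scal {V : BanachSpace} (u : nat -> V) N t y : 0 <= t -> P u N (fun n => t * y n) <= t * P u N y.
Proof.
  intro Ht. apply P_lub. intro F. rewrite psum_scal, vnorm_scal, Rabs_right by lra.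
  apply Rmult_le_compat_l; auto. apply P_ub.
Qed.

Lemma P_ext {V : BanachSpace} (u : nat -> V) N y z : (forall n, y n = z n) -> P u N y = P u N z.
Proof. intro H. replace z with y; auto. apply functional_extensionality; auto. Qed.

Lemma psum_extend {V : BanachSpace} (u : nat -> V) N N' y F : (N <= N')%nat -> (forall n, (N <= n)%nat -> y n = 0) ->
  psum u N' y F = psum u N y F.
Proof. intros H Z. unfold psum. apply vsum_extend; auto. intros i Hi. rewrite Z by auto. destruct (F i); auto. apply vscal_0. Qed.

Lemma P_extend {V : BanachSpace} (u : nat -> V) N N' y : (N <= N')%nat -> (forall n, (N <= n)%nat -> y n = 0) ->
  P u N' y = P u N y.
Proof.
  intros H Z. apply Rle_antisym; apply P_lub; intro F.
  - rewrite (psum_extend u N N' y F H Z). apply P_ub.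
  - rewrite <- (psum_extend u N N' y F H Z). apply P_ub.
Qed.

Lemma psum_norm_mass {V : BanachSpace} (u : nat -> V) M N y F : (forall n, vnorm (u n) <= M) -> (forall n, 0 <= y n) ->
  vnorm (psum u N y F) <= M * rsum N y.
Proof.
  intros HM Hy. unfold psum. eapply Rle_trans; [apply vsum_norm|]. rewrite <- rsum_scal. apply rsum_le. intros i _.
  specialize (HM i). specialize (Hy i). destruct (F i).
  - rewrite vnorm_scal, Rabs_right by lra. nra.
  - rewrite vnorm_zero. pose proof (vnorm_nonneg (u i)). nra.
Qed.

Lemma P_mass {V : BanachSpace} (u : nat -> V) M N y : (forall n, vnorm (u n) <= M) -> (forall n, 0 <= y n) ->
  P u N y <= M * rsum N y.
Proof. intros. apply P_lub. intro F. apply psum_norm_mass; auto. Qed.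

Definition rpos (r : R) : R := Rmax r 0.

Lemma pos_ge r : r <= rpos r. Proof. unfold rpos; apply Rmax_l. Qed.
Lemma pos_nonneg r : 0 <= rpos r. Proof. unfold rpos; apply Rmax_r. Qed.

Lemma psum_fun {V : BanachSpace} (u : nat -> V) N y F f : dual_ball V f ->
  f (psum u N y F) = rsum N (fun n => if F n then y n * f (u n) else 0).
Proof.
  intros [FA [FS _]]. unfold psum. rewrite (lin_vsum f FA FS). apply rsum_ext. intros i _.
  destruct (F i); [apply FS | apply lin_zero; auto].
Qed.

Lemma P_lower {V : BanachSpace} (u : nat -> V) N y f : dual_ball V f -> (forall n, 0 <= y n) ->
  rsum N (fun n => y n * rpos (f (u n))) <= P u N y.
Proof.
  intros Hf Hy. set (F := fun n => if Rlt_dec 0 (f (u n)) then true else false).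
  eapply Rle_trans; [| apply (P_ub u N y F)].
  replace (rsum N (fun n => y n * rpos (f (u n)))) with (f (psum u N y F)).
  - destruct Hf as [_ [_ Hb]]. eapply Rle_trans; [apply Rle_abs | apply Hb].
  - rewrite (psum_fun u N y F f Hf). apply rsum_ext. intros i _. unfold F, rpos.
    destruct (Rlt_dec 0 (f (u i))).
    + rewrite Rmax_left; lra.
    + rewrite Rmax_right; lra.
Qed.

Lemma psum_fun_le {V : BanachSpace} (u : nat -> V) N y F f : dual_ball V f -> (forall n, 0 <= y n) ->
  f (psum u N y F) <= rsum N (fun n => y n * rpos (f (u n))).
Proof.
  intros Hf Hy. rewrite (psum_fun u N y F f Hf). apply rsum_le. intros i _. specialize (Hy i).
  pose proof (pos_ge (f (u i))). pose proof (pos_nonneg (f (u i))). destruct (F i); nra.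
Qed.

Definition is_inf (E : R -> Prop) (m : R) := (forall e, E e -> m <= e) /\ (forall m', (forall e, E e -> m' <= e) -> m' <= m).

Lemma inf_ex (E : R -> Prop) lb : (forall e, E e -> lb <= e) -> (exists e, E e) -> exists m, is_inf E m.
Proof.
  intros Hlb [e0 He0]. set (E' := fun x => E (- x)).
  destruct (completeness E') as [s [Hs1 Hs2]].
  - exists (- lb). intros x Hx. specialize (Hlb _ Hx). lra.
  - exists (- e0). unfold E'. rewrite Ropp_involutive; auto.
  - exists (- s). split.
    + intros e He. assert (- e <= s) by (apply Hs1; unfold E'; rewrite Ropp_involutive; auto). lra.
    + intros m' Hm'. assert (s <= - m'). { apply Hs2. intros x Hx. specialize (Hm' _ Hx). lra. } lra.
Qed.

Lemma inf_approx E m d : is_inf E m -> 0 < d -> exists e, E e /\ e < m + d.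
Proof.
  intros [H1 H2] Hd. apply NNPP; intro Hn. assert (m + d <= m); [|lra].
  apply H2. intros e He. apply Rnot_lt_le. intro Hl. apply Hn. exists e; auto.
Qed.

Lemma vlim {V : BanachSpace} (w : nat -> V) (B : R) : 0 <= B ->
  (forall L L', (L <= L')%nat -> vnorm (vadd (w L') (vopp (w L))) <= B * (/2)^L) ->
  exists l, forall L, vnorm (vadd (w L) (vopp l)) <= B * (/2)^L.
Proof.
  intros HB H.
  assert (P2 : forall e, 0 < e -> exists N, forall n, (n >= N)%nat -> B * (/2)^n < e).
  { intros e He. destruct (pow_lt_1_zero (/2) ltac:(rewrite Rabs_right; lra) (e / (B + 1))) as [N HN].
    { apply Rdiv_lt_0_compat; lra. }
    exists N. intros n Hn. specialize (HN n Hn). rewrite Rabs_right in HN by (apply Rle_ge, pow_le; lra).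
    apply Rmult_lt_compat_l with (r := B + 1) in HN; [|lra]. unfold Rdiv in HN.
    rewrite <- Rmult_assoc, (Rmult_comm (B+1) e), Rmult_assoc, Rinv_r, Rmult_1_r in HN by lra.
    pose proof (pow_le (/2) n ltac:(lra)). nra. }
  destruct (vcomplete w) as [l Hl].
  - intros e He. destruct (P2 e He) as [N HN]. exists N. intros n m Hn Hm.
    destruct (Nat.le_ge_cases n m) as [Hnm | Hnm].
    + rewrite vnorm_sub_sym. eapply Rle_lt_trans; [apply H; auto | apply HN; auto].
    + eapply Rle_lt_trans; [apply H; auto | apply HN; auto].
  - exists l. intro L. apply Rnot_lt_le. intro Hlt.
    set (d := vnorm (vadd (w L) (vopp l)) - B * (/2)^L).
    destruct (Hl d ltac:(unfold d; lra)) as [N HN].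
    specialize (HN (max N L) ltac:(lia)).
    assert (H1 := vnorm_tri_sub (w L) (w (max N L)) l).
    assert (H2 := H L (max N L) ltac:(lia)). rewrite vnorm_sub_sym in H2.
    unfold d in HN. lra.
Qed.

Lemma adm_exists (eps0 : R) (a : nat) : 0 < eps0 -> exists b y,
  (a <= b)%nat /\ (forall n, 0 <= y n) /\ (forall n, (n < a \/ b <= n)%nat -> y n = 0) /\ rsum b y = 1 /\ (forall n, y n <= eps0).
Proof.
  intro He. destruct (INR_unbounded (/ eps0)) as [Q HQ].
  assert (HQp : (0 < Q)%nat). { destruct Q; [simpl in HQ; pose proof (Rinv_0_lt_compat eps0 He); lra | lia]. }
  assert (HQr : 0 < INR Q) by (apply lt_0_INR; auto).
  exists (a + Q)%nat, (fun n => if Nat.leb a n && Nat.ltb n (a + Q) then / INR Q else 0).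
  split; [lia|split; [|split; [|split]]].
  - intro n. destruct (Nat.leb a n && Nat.ltb n (a + Q)); [apply Rlt_le, Rinv_0_lt_compat; auto | lra].
  - intros n Hn. destruct (Nat.leb a n) eqn:E1; destruct (Nat.ltb n (a + Q)) eqn:E2; simpl; auto.
    apply Nat.leb_le in E1. apply Nat.ltb_lt in E2. lia.
  - rewrite rsum_split. rewrite (rsum_zero a); [|intros i Hi; destruct (Nat.leb a i) eqn:E1; simpl; auto; apply Nat.leb_le in E1; lia].
    rewrite (rsum_ext _ _ (fun _ => / INR Q)).
    + assert (Hk : forall k, rsum k (fun _ => / INR Q) = INR k * / INR Q).
      { induction k; simpl rsum; [simpl; ring|]. rewrite IHk, S_INR. ring. }
      rewrite Hk. field. lra.
    + intros i Hi. replace (Nat.leb a (a + i)) with true by (symmetry; apply Nat.leb_le; lia).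
      replace (Nat.ltb (a + i) (a + Q)) with true by (symmetry; apply Nat.ltb_lt; lia). reflexivity.
  - intro n. destruct (Nat.leb a n && Nat.ltb n (a + Q)); [|lra].
    apply Rmult_lt_compat_l with (r := eps0) in HQ; auto. rewrite Rinv_r in HQ by lra.
    apply Rlt_le. apply (Rmult_lt_reg_r (INR Q)); auto. rewrite Rinv_l by lra. lra.
Qed.


Definition agree (n : nat) (F G : nat -> bool) := forall i, (i < n)%nat -> F i = G i.

Definition upd (G : nat -> bool) (n : nat) (b : bool) : nat -> bool := fun i => if Nat.eqb i n then b else G i.

Lemma cantor (Phi : (nat -> bool) -> R) (B : R) :
  (forall F, Phi F <= B) ->
  (forall e, 0 < e -> exists n, forall F F', agree n F F' -> Phi F' <= Phi F + e) ->
  exists Fs, forall F, Phi F <= Phi Fs.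
Proof.
  intros HB Hc.
  set (E := fun n G r => exists F', agree n G F' /\ r = Phi F').
  assert (Ex : forall n G, exists s, is_lub (E n G) s).
  { intros n G. destruct (completeness (E n G)) as [s Hs].
    - exists B. intros r [F' [_ ->]]; auto.
    - exists (Phi G), G. split; [intros i _; auto | auto].
    - exists s; auto. }
  set (s := fun n G => epsilon (inhabits 0) (fun s => is_lub (E n G) s)).
  assert (Hs : forall n G, is_lub (E n G) (s n G)) by (intros n G; apply (epsilon_spec (inhabits 0) (fun s => is_lub (E n G) s)), Ex).
  assert (Split : forall n G, s n G <= Rmax (s (S n) (upd G n true)) (s (S n) (upd G n false))).
  { intros n G. apply (proj2 (Hs n G)). intros r [F' [Ha ->]].
    assert (Hag : agree (S n) (upd G n (F' n)) F').
    { intros i Hi. unfold upd. destruct (Nat.eqb i n) eqn:Ei.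
      - apply Nat.eqb_eq in Ei; subst; auto.
      - apply Nat.eqb_neq in Ei. apply Ha; lia. }
    assert (Phi F' <= s (S n) (upd G n (F' n))) by (apply (proj1 (Hs _ _)); exists F'; auto).
    destruct (F' n); [eapply Rle_trans; [apply H | apply Rmax_l] | eapply Rle_trans; [apply H | apply Rmax_r]]. }
  set (step := fun n G => if Rle_dec (s (S n) (upd G n false)) (s (S n) (upd G n true)) then upd G n true else upd G n false).
  set (Pfx := fix Pfx n := match n with O => (fun _ => false) | S n => step n (Pfx n) end).
  assert (Inv : forall n, s O (fun _ => false) <= s n (Pfx n)).
  { induction n; [simpl; lra|]. eapply Rle_trans; [apply IHn|]. eapply Rle_trans; [apply Split|].
    simpl. unfold step. destruct (Rle_dec (s (S n) (upd (Pfx n) n false)) (s (S n) (upd (Pfx n) n true))).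
    - rewrite Rmax_left by lra. lra.
    - rewrite Rmax_right by lra. lra. }
  assert (Stab : forall n k i, (i < n)%nat -> Pfx (n + k)%nat i = Pfx n i).
  { intros n k i Hi. induction k. rewrite Nat.add_0_r; auto.
    rewrite Nat.add_succ_r. simpl. unfold step. rewrite <- IHk.
    destruct (Rle_dec _ _); unfold upd; replace (Nat.eqb i (n + k)) with false by (symmetry; apply Nat.eqb_neq; lia); auto. }
  set (Fs := fun i => Pfx (S i) i).
  assert (AgF : forall n, agree n (Pfx n) Fs).
  { intros n i Hi. unfold Fs. replace n with (S i + (n - S i))%nat at 1 by lia. apply Stab. lia. }
  exists Fs. intro F.
  assert (H1 : Phi F <= s O (fun _ => false)) by (apply (proj1 (Hs _ _)); exists F; split; [intros i Hi; lia | auto]).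
  apply Rnot_lt_le. intro Hlt.
  destruct (Hc ((Phi F - Phi Fs)/2) ltac:(lra)) as [n Hn].
  assert (H2 : s n (Pfx n) <= Phi Fs + (Phi F - Phi Fs)/2).
  { apply (proj2 (Hs _ _)). intros r [F' [Ha ->]]. apply Hn. intros i Hi. rewrite <- (AgF n i Hi). auto. }
  specialize (Inv n). lra.
Qed.


Definition adm (eps0 : R) (a b : nat) (y : nat -> R) : Prop :=
  (a <= b)%nat /\ (forall n, 0 <= y n) /\ (forall n, (n < a \/ b <= n)%nat -> y n = 0) /\ rsum b y = 1 /\ (forall n, y n <= eps0).

Definition Aset {V : BanachSpace} (u : nat -> V) eps0 a (S : nat -> R) r : R -> Prop :=
  fun e => exists b y, adm eps0 a b y /\ e = P u b (fun n => S n + r * y n).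

Definition alpha {V : BanachSpace} (u : nat -> V) eps0 a S r : R :=
  epsilon (inhabits 0) (fun m => is_inf (Aset u eps0 a S r) m).

Lemma alpha_spec {V : BanachSpace} (u : nat -> V) eps0 a S r : 0 < eps0 -> is_inf (Aset u eps0 a S r) (alpha u eps0 a S r).
Proof.
  intro He. unfold alpha. apply (epsilon_spec (inhabits 0) (fun m => is_inf (Aset u eps0 a S r) m)).
  apply (inf_ex _ 0).
  - intros e [b [y [_ ->]]]. apply P_nonneg.
  - destruct (adm_exists eps0 a He) as [b [y Hy]]. exists (P u b (fun n => S n + r * y n)), b, y. split; auto.
Qed.

Definition next {V : BanachSpace} (u : nat -> V) eps0 eta (K a : nat) (S : nat -> R) : nat * (nat -> R) :=
  epsilon (inhabits (a, S)) (fun p => adm eps0 a (fst p) (snd p) /\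
     P u (fst p) (fun n => S n + (/2)^K * snd p n) <= alpha u eps0 a S ((/2)^K) + eta * (/4)^K).

Lemma next_spec {V : BanachSpace} (u : nat -> V) eps0 eta K a S : 0 < eps0 -> 0 < eta ->
  adm eps0 a (fst (next u eps0 eta K a S)) (snd (next u eps0 eta K a S)) /\
  P u (fst (next u eps0 eta K a S)) (fun n => S n + (/2)^K * snd (next u eps0 eta K a S) n)
    <= alpha u eps0 a S ((/2)^K) + eta * (/4)^K.
Proof.
  intros He Heta. unfold next.
  apply (epsilon_spec (inhabits (a, S)) (fun p => adm eps0 a (fst p) (snd p) /\
     P u (fst p) (fun n => S n + (/2)^K * snd p n) <= alpha u eps0 a S ((/2)^K) + eta * (/4)^K)).
  destruct (inf_approx _ _ (eta * (/4)^K) (alpha_spec u eps0 a S ((/2)^K) He)) as [e [[b [y [Hy ->]]] Hlt]].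
  { apply Rmult_lt_0_compat; auto. apply pow_lt; lra. }
  exists (b, y). simpl. split; auto. lra.
Qed.

Fixpoint st {V : BanachSpace} (u : nat -> V) eps0 eta (K : nat) : nat * (nat -> R) :=
  match K with
  | O => (O, fun _ => 0)
  | S K => let p := st u eps0 eta K in let q := next u eps0 eta K (fst p) (snd p) in
           (fst q, fun n => snd p n + (/2)^(S K) * snd q n)
  end.

Definition A {V : BanachSpace} (u : nat -> V) eps0 eta K := fst (st u eps0 eta K).
Definition Sq {V : BanachSpace} (u : nat -> V) eps0 eta K := snd (st u eps0 eta K).
Definition Y {V : BanachSpace} (u : nat -> V) eps0 eta K := snd (next u eps0 eta K (A u eps0 eta K) (Sq u eps0 eta K)).
Definition alph {V : BanachSpace} (u : nat -> V) eps0 eta K := alpha u eps0 (A u eps0 eta K) (Sq u eps0 eta K) ((/2)^K).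

Lemma A_S {V : BanachSpace} (u : nat -> V) eps0 eta K :
  A u eps0 eta (S K) = fst (next u eps0 eta K (A u eps0 eta K) (Sq u eps0 eta K)).
Proof. reflexivity. Qed.

Lemma Sq_S {V : BanachSpace} (u : nat -> V) eps0 eta K n :
  Sq u eps0 eta (S K) n = Sq u eps0 eta K n + (/2)^(S K) * Y u eps0 eta K n.
Proof. reflexivity. Qed.

Lemma half_pos K : 0 < (/2)^K. Proof. apply pow_lt; lra. Qed.


Lemma step_spec {V : BanachSpace} (u : nat -> V) eps0 eta K : 0 < eps0 -> 0 < eta ->
  adm eps0 (A u eps0 eta K) (A u eps0 eta (S K)) (Y u eps0 eta K) /\
  P u (A u eps0 eta (S K)) (fun n => Sq u eps0 eta K n + (/2)^K * Y u eps0 eta K n) <= alph u eps0 eta K + eta * (/4)^K.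
Proof. intros He Heta. rewrite A_S. unfold Y, alph. apply next_spec; auto. Qed.

Lemma A_lt {V : BanachSpace} (u : nat -> V) eps0 eta K : 0 < eps0 -> 0 < eta ->
  (A u eps0 eta K < A u eps0 eta (S K))%nat.
Proof.
  intros He Heta. destruct (step_spec u eps0 eta K He Heta) as [[H1 [H2 [H3 [H4 H5]]]] _].
  destruct (Nat.eq_dec (A u eps0 eta K) (A u eps0 eta (S K))) as [E | E]; [|lia].
  exfalso. rewrite rsum_zero in H4; [lra|]. intros i Hi. apply H3. left. lia.
Qed.

Lemma A_mono {V : BanachSpace} (u : nat -> V) eps0 eta K L : 0 < eps0 -> 0 < eta -> (K <= L)%nat ->
  (A u eps0 eta K <= A u eps0 eta L)%nat.
Proof.
  intros He Heta H. induction H; [lia|]. pose proof (A_lt u eps0 eta m He Heta). lia.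
Qed.

Lemma A_ge {V : BanachSpace} (u : nat -> V) eps0 eta K : 0 < eps0 -> 0 < eta -> (K <= A u eps0 eta K)%nat.
Proof.
  intros He Heta. induction K; [lia|]. pose proof (A_lt u eps0 eta K He Heta). lia.
Qed.

Lemma Sq_props {V : BanachSpace} (u : nat -> V) eps0 eta K : 0 < eps0 -> 0 < eta ->
  (forall n, 0 <= Sq u eps0 eta K n) /\ (forall n, (A u eps0 eta K <= n)%nat -> Sq u eps0 eta K n = 0) /\
  rsum (A u eps0 eta K) (Sq u eps0 eta K) = 1 - (/2)^K.
Proof.
  intros He Heta. induction K.
  - unfold Sq, A; simpl. split; [intros; lra | split; [intros; reflexivity | ring]].
  - destruct IHK as [I1 [I2 I3]]. destruct (step_spec u eps0 eta K He Heta) as [[H1 [H2 [H3 [H4 H5]]]] _].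
    pose proof (half_pos (S K)).
    split; [|split].
    + intro n. rewrite Sq_S. specialize (I1 n). specialize (H2 n). nra.
    + intros n Hn. rewrite Sq_S. rewrite I2 by lia. rewrite H3 by lia. ring.
    + replace (rsum (A u eps0 eta (S K)) (Sq u eps0 eta (S K))) with
        (rsum (A u eps0 eta (S K)) (Sq u eps0 eta K) + (/2)^(S K) * rsum (A u eps0 eta (S K)) (Y u eps0 eta K)).
      * rewrite H4. rewrite (rsum_extend (A u eps0 eta K)); [| lia | auto]. rewrite I3. simpl. field.
      * rewrite <- rsum_scal, <- rsum_add. apply rsum_ext. intros; rewrite Sq_S; reflexivity.
Qed.

Lemma Sq_prefix {V : BanachSpace} (u : nat -> V) eps0 eta K L n : 0 < eps0 -> 0 < eta -> (K <= L)%nat ->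
  (n < A u eps0 eta K)%nat -> Sq u eps0 eta L n = Sq u eps0 eta K n.
Proof.
  intros He Heta HL Hn. induction HL; auto. rewrite Sq_S, IHHL.
  destruct (step_spec u eps0 eta m He Heta) as [[H1 [H2 [H3 [H4 H5]]]] _].
  rewrite H3; [ring|]. left. pose proof (A_mono u eps0 eta K m He Heta HL). lia.
Qed.

Lemma Sq_diff {V : BanachSpace} (u : nat -> V) eps0 eta K L n : 0 < eps0 -> 0 < eta -> (K <= L)%nat ->
  0 <= Sq u eps0 eta L n - Sq u eps0 eta K n <= eps0 * ((/2)^K - (/2)^L).
Proof.
  intros He Heta HL. induction HL.
  - split; lra.
  - rewrite Sq_S. destruct (step_spec u eps0 eta m He Heta) as [[H1 [H2 [H3 [H4 H5]]]] _].
    specialize (H2 n). specialize (H5 n). pose proof (half_pos (S m)).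
    assert (E : (/2)^m - (/2)^(S m) = (/2)^(S m)) by (simpl; field).
    split; [nra|]. assert ((/2)^(S m) * Y u eps0 eta m n <= (/2)^(S m) * eps0) by (apply Rmult_le_compat_l; lra).
    replace ((/2)^K - (/2)^(S m)) with (((/2)^K - (/2)^m) + ((/2)^m - (/2)^(S m))) by ring. rewrite E. nra.
Qed.

Lemma P_zero_len {V : BanachSpace} (u : nat -> V) y : P u O y = 0.
Proof. apply Rle_antisym; [apply P_lub; intro F; unfold psum; simpl; rewrite vnorm_zero; lra | apply P_nonneg]. Qed.

Lemma F1 {V : BanachSpace} (u : nat -> V) eps0 eta K : 0 < eps0 -> 0 < eta ->
  alph u eps0 eta K <= alph u eps0 eta (S K).
Proof.
  intros He Heta. destruct (step_spec u eps0 eta K He Heta) as [[H1 [H2 [H3 [H4 H5]]]] _].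
  unfold alph at 2. apply (proj2 (alpha_spec u eps0 _ _ _ He)).
  intros e [b [y [[G1 [G2 [G3 [G4 G5]]]] ->]]].
  set (z := fun n => /2 * Y u eps0 eta K n + /2 * y n).
  assert (Hz : adm eps0 (A u eps0 eta K) b z).
  { split; [lia|split; [|split; [|split]]].
    - intro n; unfold z; specialize (H2 n); specialize (G2 n); lra.
    - intros n Hn. unfold z. rewrite H3, G3; try lra; lia.
    - unfold z. rewrite rsum_add, !rsum_scal, G4. rewrite (rsum_extend (A u eps0 eta (S K)) b); [|lia|].
      + rewrite H4; field.
      + intros; apply H3; lia.
    - intro n; unfold z; specialize (H5 n); specialize (G5 n); lra. }
  unfold alph. replace (P u b (fun n => Sq u eps0 eta (S K) n + (/ 2) ^ S K * y n))
    with (P u b (fun n => Sq u eps0 eta K n + (/2)^K * z n)).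
  - apply (proj1 (alpha_spec u eps0 _ _ _ He)). exists b, z; auto.
  - apply P_ext. intro n. rewrite Sq_S. unfold z. simpl. ring.
Qed.

Lemma F2 {V : BanachSpace} (u : nat -> V) eps0 eta K : 0 < eps0 -> 0 < eta ->
  P u (A u eps0 eta (S K)) (Sq u eps0 eta (S K)) <=
  /2 * P u (A u eps0 eta K) (Sq u eps0 eta K) + /2 * (alph u eps0 eta K + eta * (/4)^K).
Proof.
  intros He Heta. destruct (step_spec u eps0 eta K He Heta) as [[H1 [H2 [H3 [H4 H5]]]] Hp].
  destruct (Sq_props u eps0 eta K He Heta) as [S1 [S2 S3]].
  rewrite (P_ext u _ _ (fun n => /2 * Sq u eps0 eta K n + /2 * (Sq u eps0 eta K n + (/2)^K * Y u eps0 eta K n))).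
  - eapply Rle_trans; [apply P_add|].
    assert (Q1 := P_scal u (A u eps0 eta (S K)) (/2) (Sq u eps0 eta K) ltac:(lra)).
    assert (Q2 := P_scal u (A u eps0 eta (S K)) (/2) (fun n => Sq u eps0 eta K n + (/2)^K * Y u eps0 eta K n) ltac:(lra)).
    rewrite (P_extend u (A u eps0 eta K) (A u eps0 eta (S K)) (Sq u eps0 eta K)) in Q1; [| lia | auto].
    lra.
  - intro n. rewrite Sq_S. simpl. field.
Qed.

Lemma echain {V : BanachSpace} (u : nat -> V) eps0 eta c : 0 < eps0 -> 0 < eta -> c <= alph u eps0 eta O ->
  forall K, (/2)^K * (c - eta * (2 - 2 * (/2)^K)) <= alph u eps0 eta K - P u (A u eps0 eta K) (Sq u eps0 eta K).
Proof.
  intros He Heta H0 K. induction K.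
  - unfold A at 1. simpl. rewrite P_zero_len. simpl in *. lra.
  - assert (H1 := F1 u eps0 eta K He Heta). assert (H2 := F2 u eps0 eta K He Heta).
    assert (E1 : (/2)^(S K) = /2 * (/2)^K) by reflexivity.
    assert (E2 : (/4)^K = (/2)^K * (/2)^K) by (rewrite <- Rpow_mult_distr; f_equal; field).
    rewrite E1, E2 in *. pose proof (half_pos K). nra.
Qed.

Lemma F4 {V : BanachSpace} (u : nat -> V) eps0 eta M K L : 0 < eps0 -> 0 < eta -> (forall n, vnorm (u n) <= M) -> (K < L)%nat ->
  alph u eps0 eta K <= P u (A u eps0 eta L) (Sq u eps0 eta L) + M * (/2)^L.
Proof.
  intros He Heta HM HKL.
  set (w := (/2)^K - (/2)^L).
  assert (Hw : 0 < w).
  { unfold w. replace L with (K + (L - K))%nat by lia. rewrite pow_add.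
    pose proof (half_pos K). assert ((/2)^(L - K) < 1) by (apply pow_lt_1_compat; [lra | lia]). nra. }
  destruct (Sq_props u eps0 eta K He Heta) as [SK1 [SK2 SK3]].
  destruct (Sq_props u eps0 eta L He Heta) as [SL1 [SL2 SL3]].
  assert (HAm : (A u eps0 eta K <= A u eps0 eta L)%nat) by (apply A_mono; auto; lia).
  set (d := fun n => Sq u eps0 eta L n - Sq u eps0 eta K n).
  assert (Hd : forall n, 0 <= d n <= eps0 * w) by (intro n; apply Sq_diff; auto; lia).
  assert (Hsd : rsum (A u eps0 eta L) d = w).
  { unfold d. rewrite (rsum_ext _ _ (fun n => Sq u eps0 eta L n + (-1) * Sq u eps0 eta K n)) by (intros; ring).
    rewrite rsum_add, rsum_scal, SL3, (rsum_extend (A u eps0 eta K)), SK3 by (auto; lia). unfold w; ring. }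
  set (z := fun n => / w * d n).
  assert (Hz : adm eps0 (A u eps0 eta K) (A u eps0 eta L) z).
  { split; [auto|split; [|split; [|split]]].
    - intro n. unfold z. specialize (Hd n). apply Rmult_le_pos; [apply Rlt_le, Rinv_0_lt_compat|]; lra.
    - intros n [Hn | Hn]; unfold z, d.
      + rewrite (Sq_prefix u eps0 eta K L n) by (auto; lia). ring.
      + rewrite SL2, SK2 by lia. ring.
    - unfold z. rewrite rsum_scal, Hsd. field; lra.
    - intro n. unfold z. specialize (Hd n). apply (Rmult_le_reg_l w); auto. rewrite <- Rmult_assoc, Rinv_r by lra. lra. }
  assert (Ha := proj1 (alpha_spec u eps0 (A u eps0 eta K) (Sq u eps0 eta K) ((/2)^K) He)).
  specialize (Ha (P u (A u eps0 eta L) (fun n => Sq u eps0 eta K n + (/2)^K * z n))).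
  eapply Rle_trans; [apply Ha; exists (A u eps0 eta L), z; auto|].
  set (t := (/2)^L / w).
  rewrite (P_ext u _ _ (fun n => Sq u eps0 eta L n + t * d n)).
  - eapply Rle_trans; [apply P_add|].
    assert (Ht : 0 <= t) by (unfold t; pose proof (half_pos L); apply Rlt_le, Rdiv_lt_0_compat; lra).
    eapply Rle_trans; [apply Rplus_le_compat_l, P_scal; auto|].
    assert (Pm := P_mass u M (A u eps0 eta L) d HM (fun n => proj1 (Hd n))). rewrite Hsd in Pm.
    assert (t * P u (A u eps0 eta L) d <= t * (M * w)) by (apply Rmult_le_compat_l; auto).
    replace (t * (M * w)) with (M * (/2)^L) in H by (unfold t; field; lra). lra.
  - intro n. unfold z, d, t. unfold w. field. fold w. lra.
Qed.


Lemma lim_half (a b B : R) (L0 : nat) : 0 <= B -> (forall L, (L0 <= L)%nat -> a <= b + B * (/2)^L) -> a <= b.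
Proof.
  intros HB H. apply Rnot_lt_le. intro Hlt.
  destruct (pow_lt_1_zero (/2) ltac:(rewrite Rabs_right; lra) ((a - b) / (B + 1))) as [N HN].
  { apply Rdiv_lt_0_compat; lra. }
  specialize (HN (max N L0) ltac:(lia)). specialize (H (max N L0) ltac:(lia)).
  rewrite Rabs_right in HN by (apply Rle_ge, pow_le; lra).
  apply Rmult_lt_compat_l with (r := B + 1) in HN; [|lra]. unfold Rdiv in HN.
  rewrite <- Rmult_assoc, (Rmult_comm (B+1) (a - b)), Rmult_assoc, Rinv_r, Rmult_1_r in HN by lra.
  pose proof (pow_le (/2) (max N L0) ltac:(lra)). nra.
Qed.

Lemma rsum_A_split (g : nat -> R) (a b : nat) : (a <= b)%nat ->
  rsum b g = rsum a g + rsum (b - a) (fun i => g (a + i)%nat).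
Proof. intro H. rewrite <- rsum_split. f_equal. lia. Qed.

Lemma vsum_A_split {V : BanachSpace} (g : nat -> V) (a b : nat) : (a <= b)%nat ->
  vsum b g = vadd (vsum a g) (vsum (b - a) (fun i => g (a + i)%nat)).
Proof. intro H. rewrite <- vsum_split. f_equal. lia. Qed.

Lemma vsub_add_l {V : BanachSpace} (a r : V) : vadd (vadd a r) (vopp a) = r.
Proof. rewrite (vadd_comm a r), <- vadd_assoc, vadd_opp, vadd_0; reflexivity. Qed.

Definition xs {V : BanachSpace} (u : nat -> V) eps0 eta L F := psum u (A u eps0 eta L) (Sq u eps0 eta L) F.

Lemma xs_cauchy {V : BanachSpace} (u : nat -> V) eps0 eta M L L' F : 0 < eps0 -> 0 < eta -> (forall n, vnorm (u n) <= M) ->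
  (L <= L')%nat -> vnorm (vadd (xs u eps0 eta L' F) (vopp (xs u eps0 eta L F))) <= M * (/2)^L.
Proof.
  intros He Heta HM HL. assert (HA := A_mono u eps0 eta L L' He Heta HL).
  destruct (Sq_props u eps0 eta L He Heta) as [SL1 [SL2 SL3]].
  destruct (Sq_props u eps0 eta L' He Heta) as [SL1' [SL2' SL3']].
  unfold xs, psum. rewrite (vsum_A_split _ _ _ HA).
  rewrite (vsum_ext (A u eps0 eta L) _ (fun n => if F n then vscal (Sq u eps0 eta L n) (u n) else vzero)).
  2: { intros i Hi. rewrite (Sq_prefix u eps0 eta L L' i) by auto. reflexivity. }
  rewrite vsub_add_l. eapply Rle_trans; [apply vsum_norm|].
  eapply Rle_trans; [apply (rsum_le _ _ (fun i => M * Sq u eps0 eta L' (A u eps0 eta L + i)%nat))|].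
  - intros i _. specialize (HM (A u eps0 eta L + i)%nat). specialize (SL1' (A u eps0 eta L + i)%nat).
    destruct (F _). rewrite vnorm_scal, Rabs_right by lra. rewrite (Rmult_comm M); apply Rmult_le_compat_l; lra. rewrite vnorm_zero. pose proof (vnorm_nonneg (u (A u eps0 eta L + i)%nat)). nra.
  - rewrite rsum_scal. rewrite (rsum_A_split _ _ _ HA) in SL3'.
    rewrite (rsum_ext (A u eps0 eta L) (Sq u eps0 eta L') (Sq u eps0 eta L)) in SL3' by (intros; apply Sq_prefix; auto).
    assert (M0 : 0 <= M) by (specialize (HM O); pose proof (vnorm_nonneg (u O)); lra).
    pose proof (half_pos L'). apply Rmult_le_compat_l; auto. lra.
Qed.

Lemma xinf_ex {V : BanachSpace} (u : nat -> V) eps0 eta M F : 0 < eps0 -> 0 < eta -> (forall n, vnorm (u n) <= M) ->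
  exists l, forall L, vnorm (vadd (xs u eps0 eta L F) (vopp l)) <= M * (/2)^L.
Proof.
  intros He Heta HM. apply vlim.
  - specialize (HM O); pose proof (vnorm_nonneg (u O)); lra.
  - intros; apply xs_cauchy; auto.
Qed.

Definition xinf {V : BanachSpace} (u : nat -> V) eps0 eta M F : V :=
  epsilon (inhabits vzero) (fun l => forall L, vnorm (vadd (xs u eps0 eta L F) (vopp l)) <= M * (/2)^L).

Lemma xinf_spec {V : BanachSpace} (u : nat -> V) eps0 eta M F : 0 < eps0 -> 0 < eta -> (forall n, vnorm (u n) <= M) ->
  forall L, vnorm (vadd (xs u eps0 eta L F) (vopp (xinf u eps0 eta M F))) <= M * (/2)^L.
Proof.
  intros He Heta HM. unfold xinf.
  apply (epsilon_spec (inhabits vzero) (fun l => forall L, vnorm (vadd (xs u eps0 eta L F) (vopp l)) <= M * (/2)^L)).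
  apply xinf_ex; auto.
Qed.

Lemma dual_opp {V : BanachSpace} f (x : V) : dual_ball V f -> f (vopp x) = - f x.
Proof. intros [_ [FS _]]. rewrite vopp_scal, FS; ring. Qed.

Lemma main_bounded (V : BanachSpace) (u : nat -> V) (M : R) (HM : forall n, vnorm (u n) <= M)
  (hu : weakly_null V u) (eps0 c : R) : 0 < eps0 -> 0 < c ->
  exists b y, adm eps0 O b y /\ forall F, vnorm (psum u b y F) <= c.
Proof.
  intros He Hc. apply NNPP. intro Hn.
  set (eta := c / 4). assert (Heta : 0 < eta) by (unfold eta; lra).
  assert (M0 : 0 <= M) by (specialize (HM O); pose proof (vnorm_nonneg (u O)); lra).
  assert (Ha0 : c <= alph u eps0 eta O).
  { unfold alph. apply (proj2 (alpha_spec u eps0 _ _ _ He)). intros e [b [y [Hy ->]]].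
    unfold A, Sq; simpl.
    rewrite (P_ext u b _ y) by (intro n; ring).
    apply Rnot_lt_le. intro Hlt. apply Hn. exists b, y. split; auto.
    intro F. pose proof (P_ub u b y F). lra. }
  assert (EC := echain u eps0 eta c He Heta Ha0).
  set (Phi := fun F => vnorm (xinf u eps0 eta M F)).
  assert (Xs := fun F => xinf_spec u eps0 eta M F He Heta HM).
  assert (Hxs0 : forall F, xs u eps0 eta O F = vzero) by (intro F; reflexivity).
  destruct (cantor Phi M) as [Fs HFs].
  - intro F. unfold Phi. specialize (Xs F O). rewrite Hxs0, vadd_0l, vnorm_opp in Xs. simpl in Xs. lra.
  - intros e He'. destruct (pow_lt_1_zero (/2) ltac:(rewrite Rabs_right; lra) (e / (2 * M + 1))) as [L HL].
    { apply Rdiv_lt_0_compat; lra. }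
    specialize (HL L (le_n L)). rewrite Rabs_right in HL by (apply Rle_ge, pow_le; lra).
    exists (A u eps0 eta L). intros F F' Hag.
    assert (E : xs u eps0 eta L F = xs u eps0 eta L F').
    { unfold xs, psum. apply vsum_ext. intros i Hi. rewrite (Hag i Hi). reflexivity. }
    unfold Phi. assert (X1 := Xs F L). assert (X2 := Xs F' L). rewrite E in X1.
    assert (R1 := vnorm_rev (xinf u eps0 eta M F') (xs u eps0 eta L F')).
    rewrite vnorm_sub_sym in R1.
    assert (R2 := vnorm_rev (xs u eps0 eta L F') (xinf u eps0 eta M F)).
    apply Rmult_lt_compat_l with (r := 2 * M + 1) in HL; [|lra]. unfold Rdiv in HL.
    rewrite <- Rmult_assoc, (Rmult_comm (2 * M + 1) e), Rmult_assoc, Rinv_r, Rmult_1_r in HL by lra.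
    pose proof (half_pos L). nra.
  -
    assert (HPL : forall L, P u (A u eps0 eta L) (Sq u eps0 eta L) <= Phi Fs).
    { intro L. apply P_lub. intro F.
      set (F' := fun n => if Nat.ltb n (A u eps0 eta L) then F n else false).
      apply (lim_half _ _ M L M0). intros L' HL'.
      assert (E : xs u eps0 eta L' F' = psum u (A u eps0 eta L) (Sq u eps0 eta L) F).
      { unfold xs, psum. rewrite (vsum_A_split _ _ _ (A_mono u eps0 eta L L' He Heta HL')).
        rewrite (vsum_zero (A u eps0 eta L' - A u eps0 eta L)).
        - rewrite vadd_0. apply vsum_ext. intros i Hi. unfold F'.
          replace (Nat.ltb i (A u eps0 eta L)) with true by (symmetry; apply Nat.ltb_lt; auto).
          rewrite (Sq_prefix u eps0 eta L L' i) by auto. reflexivity.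
        - intros i _. unfold F'. replace (Nat.ltb (A u eps0 eta L + i) (A u eps0 eta L)) with false by (symmetry; apply Nat.ltb_ge; lia).
          reflexivity. }
      rewrite <- E. assert (X := Xs F' L'). assert (R := vnorm_rev (xs u eps0 eta L' F') (xinf u eps0 eta M F')).
      specialize (HFs F'). unfold Phi in *. lra. }
    destruct (pickf_spec (xinf u eps0 eta M Fs)) as [Fd Fn].
    set (f := pickf (xinf u eps0 eta M Fs)) in *.
    assert (Low : forall L, Phi Fs - M * (/2)^L <= rsum (A u eps0 eta L) (fun n => Sq u eps0 eta L n * rpos (f (u n)))).
    { intro L. destruct (Sq_props u eps0 eta L He Heta) as [S1 _].
      eapply Rle_trans; [| apply (psum_fun_le u _ _ Fs f Fd S1)].
      fold (xs u eps0 eta L Fs).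
      assert (X := Xs Fs L). destruct Fd as [FA [FS FB]].
      assert (B := FB (vadd (xs u eps0 eta L Fs) (vopp (xinf u eps0 eta M Fs)))).
      rewrite FA, dual_opp in B by (split; auto). unfold Phi. rewrite <- Fn.
      apply Rabs_def2b in B. lra. }
    destruct (hu f (dual_ball_dual f Fd) (c / 4) ltac:(lra)) as [N0 HN0].
    set (K := N0).
    assert (HK : forall n, (A u eps0 eta K <= n)%nat -> rpos (f (u n)) <= c / 4).
    { intros n Hn2. pose proof (A_ge u eps0 eta K He Heta). specialize (HN0 n ltac:(unfold K in *; lia)).
      unfold Rdist in HN0. rewrite Rminus_0_r in HN0. apply Rabs_def2 in HN0. unfold rpos. apply Rmax_lub; lra. }
    assert (Up : forall L, (K < L)%nat -> rsum (A u eps0 eta L) (fun n => Sq u eps0 eta L n * rpos (f (u n))) <=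
                 P u (A u eps0 eta K) (Sq u eps0 eta K) + c / 4 * (/2)^K).
    { intros L HL. assert (HA := A_mono u eps0 eta K L He Heta ltac:(lia)).
      destruct (Sq_props u eps0 eta K He Heta) as [SK1 [SK2 SK3]].
      destruct (Sq_props u eps0 eta L He Heta) as [SL1 [SL2 SL3]].
      rewrite (rsum_A_split _ _ _ HA).
      rewrite (rsum_ext (A u eps0 eta K) _ (fun n => Sq u eps0 eta K n * rpos (f (u n)))) by (intros; rewrite (Sq_prefix u eps0 eta K L) by (auto; lia); reflexivity).
      assert (H1 := P_lower u (A u eps0 eta K) (Sq u eps0 eta K) f Fd SK1).
      assert (H2 : rsum (A u eps0 eta L - A u eps0 eta K) (fun i => Sq u eps0 eta L (A u eps0 eta K + i)%nat * rpos (f (u (A u eps0 eta K + i)%nat)))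
                   <= c / 4 * rsum (A u eps0 eta L - A u eps0 eta K) (fun i => Sq u eps0 eta L (A u eps0 eta K + i)%nat)).
      { rewrite <- rsum_scal. apply rsum_le. intros i _. specialize (SL1 (A u eps0 eta K + i)%nat).
        specialize (HK (A u eps0 eta K + i)%nat ltac:(lia)). pose proof (pos_nonneg (f (u (A u eps0 eta K + i)%nat))). nra. }
      rewrite (rsum_A_split _ _ _ HA) in SL3.
      rewrite (rsum_ext (A u eps0 eta K) (Sq u eps0 eta L) (Sq u eps0 eta K)) in SL3 by (intros; apply Sq_prefix; auto; lia).
      pose proof (half_pos L). nra. }
    specialize (EC K).
    assert (Fin : forall L, (S K <= L)%nat -> alph u eps0 eta K <= P u (A u eps0 eta K) (Sq u eps0 eta K) + c / 4 * (/2)^K + (2 * M) * (/2)^L).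
    { intros L HL. assert (H4 := F4 u eps0 eta M K L He Heta HM ltac:(lia)). specialize (HPL L). specialize (Low L). specialize (Up L ltac:(lia)). lra. }
    assert (Fin2 := lim_half _ _ (2 * M) (S K) ltac:(lra) Fin).
    pose proof (half_pos K). assert (0 <= (/2)^K <= 1) by (split; [lra | clear; induction K; simpl; [lra | pose proof (half_pos K); nra]]).
    set (al := alph u eps0 eta K) in *. set (pk := P u (A u eps0 eta K) (Sq u eps0 eta K)) in *.
    unfold eta in EC. assert (0 < (/2)^K * c) by (apply Rmult_lt_0_compat; lra).
    assert (0 <= (/2)^K * (/2)^K * c) by (apply Rmult_le_pos; [apply Rmult_le_pos|]; lra).
    set (h := (/2)^K) in *. nra.
Qed.


Definition pickb {V : BanachSpace} (v : nat -> V) (M : R) (N : nat) : nat :=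
  epsilon (inhabits O) (fun n => (N <= n)%nat /\ vnorm (v n) <= M).

Fixpoint sigq {V : BanachSpace} (v : nat -> V) (M : R) (k : nat) : nat :=
  match k with O => pickb v M O | S k => pickb v M (S (sigq v M k)) end.

Theorem lemma19 (V : BanachSpace) (v : nat -> V) (hv : weakly_null V v) :
  forall eps : R, eps > 0 ->
  exists (j : nat) (k : nat -> nat) (lam : nat -> R),
    (forall i, (i < j)%nat -> (k i < k (S i))%nat) /\
    (forall i, (i <= j)%nat -> 0 <= lam i) /\
    sum_f_R0 lam j = 1 /\
    (forall i, (i <= j)%nat -> lam i <= eps) /\
    (forall F : nat -> bool,
       vnorm (vsum (S j) (fun i => if F i then vscal (lam i) (v (k i)) else vzero))
       <= eps).
Proof.
  intros eps Heps.
  destruct (wn_bounded_sub V v hv) as [M HM].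
  assert (Pk : forall N, (N <= pickb v M N)%nat /\ vnorm (v (pickb v M N)) <= M).
  { intro N. unfold pickb. apply (epsilon_spec (inhabits O) (fun n => (N <= n)%nat /\ vnorm (v n) <= M)).
    destruct (HM N) as [n [H1 H2]]. exists n; split; auto. }
  set (sg := sigq v M).
  assert (Sg1 : forall k, (sg k < sg (S k))%nat) by (intro k; unfold sg; simpl; destruct (Pk (S (sigq v M k))); lia).
  assert (Sg2 : forall k, (k <= sg k)%nat).
  { induction k; [lia|]. specialize (Sg1 k). lia. }
  assert (Sg3 : forall k, vnorm (v (sg k)) <= M) by (intro k; unfold sg; destruct k; simpl; apply Pk).
  set (u := fun k => v (sg k)).
  assert (hu : weakly_null V u).
  { intros f Hf e He. destruct (hv f Hf e He) as [N HN]. exists N. intros n Hn. apply HN. specialize (Sg2 n). lia. }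
  destruct (main_bounded V u M Sg3 hu eps eps Heps Heps) as [b [y [[Y1 [Y2 [Y3 [Y4 Y5]]]] Hy]]].
  assert (Hb : (1 <= b)%nat). { destruct b; [simpl in Y4; lra | lia]. }
  exists (b - 1)%nat, sg, y. split; [|split; [|split; [|split]]].
  - intros; apply Sg1.
  - intros; apply Y2.
  - rewrite rsum_sum_f. replace (S (b - 1)) with b by lia. auto.
  - intros; apply Y5.
  - intro F. replace (S (b - 1)) with b by lia. apply (Hy F).
Qed.
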